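(* For every parity game $\mathcal{G}$, the algorithm $\mathtt{solve}(\mathcal{G})$ (defined in the context) solves $\mathcal{G}$: it terminates and returns $W_0,W_1,\sigma_0,\sigma_1$ such that $W_0\cup W_1=V$, $W_0\cap W_1=\emptyset$, and for each player $\alpha\in\{0,1\}$, $\sigma_\alpha$ is a strategy of player $\alpha$ such that every play starting in $W_\alpha$ and consistent with $\sigma_\alpha$ is won by $\alpha$ (so $W_\alpha$ is exactly the set of vertices won by $\alpha$).
   Context: Parity games: $\mathcal{G}=(V_0,V_1,E,\mathrm{pr})$, $V=V_0\cup V_1$ finite, partitioned into vertices of Even ($0$) and Odd ($1$); $E\subseteq V\times V$ with every vertex having a successor; $\mathrm{pr}:V\to\{0,\dots,d\}$. $E(u)=\{v:(u,v)\in E\}$, $\mathrm{pr}(U)=\max_{u\in U}\mathrm{pr}(u)$, $\mathrm{pr}^{-1}(p)$ the set of vertices of priority $p$, $\overline{\alpha}=1-\alpha$. A play (infinite path) is won by Even iff the highest priority occurring infinitely often is even, otherwise by Odd; a cycle is won by $\alpha$ if its highest priority has parity $\alpha$. A strategy of $\alpha$ is a partial function $\sigma$ on $V_\alpha$ with $\sigma(v)\in E(v)$; a play is consistent with $\sigma$ if every vertex $v\in\mathrm{dom}(\sigma)$ on it is followed by $\sigma(v)$. A vertex is won by $\alpha$ if $\alpha$ has a strategy all of whose consistent plays from it are won by $\alpha$. For $U\subseteq V$, $\mathcal{G}\cap U$ is the subgame with vertices $V\cap U$ and edges $E\cap(U\times U)$, and $\mathcal{G}\setminus U=\mathcal{G}\cap(V\setminus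 U)$. A $p$-tangle is a nonempty $U\subseteq V$ with $p=\mathrm{pr}(U)$ such that for $\alpha\equiv p\pmod 2$ there is a strategy $\sigma:U\cap V_\alpha\to U$ (witness strategy $\sigma_T(U)$) with $(U,E\cap(\sigma\cup((U\cap V_{\overline{\alpha}})\times U)))$ strongly connected and all its cycles won by $\alpha$ (''won by $\alpha$''). For a tangle $t$ won by $\alpha$ in a game with edge set $E$, $E_T(t)=\{v\notin t:\exists u\in t\cap V_{\overline{\alpha}},(u,v)\in E\}$. $T_\alpha$ denotes the tangles of $T$ won by $\alpha$; for a subgame $\mathcal{G}'$, $T\cap\mathcal{G}'$ denotes the tangles of $T$ contained in its vertex set. Standard attractor: $\mathit{Attr}^{\mathcal{G}}_\alpha(A)$ is the least $Z\supseteq A$ containing every $v\in V_\alpha$ with $E(v)\cap Z\neq\emptyset$ and every $v\in V_{\overline{\alpha}}$ with $E(v)\subseteq Z$, computed iteratively with a strategy $\sigma$ mapping each $\alpha$-vertex added to $Z$ to a successor already in $Z$ (and each $\alpha$-vertex of $A$ to a successor in $Z$ once one exists). Tangle attractor $\mathit{TAttr}^{\mathcal{G},T}_\alpha(A)$: the least $Z\supseteq A$ closed under the two rules above and additionally containing every vertex of every $t\in T_\alpha$ with $\emptyset\neq E_T(t)\subseteq Z$ ($E_T$ computed in $\mathcal{G}$); its strategy is built as for $\mathit{Attr}$, and when the vertices of a tangle $t$ are added, $\sigma(u):=\sigma_T(t)(u)$ for every $\alpha$-vertex $u\in t$ not yet in $\mathrm{dom}(\sigma)$. extract-tangles$(Z,\sigma)$,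 for a subgame $\mathcal{G}'=(V',E')$ with top priority $p$, $\alpha\equiv p$, region $Z\subseteq V'$ and strategy $\sigma$: let $Y_Z$ be the greatest $X\subseteq Z$ such that every $v\in X\cap V_{\overline{\alpha}}$ has $E'(v)\subseteq X$ and every $v\in X\cap V_\alpha$ has $\sigma(v)\in X$; let $H$ be the graph on $Y_Z$ with edges $(v,\sigma(v))$ for $v\in Y_Z\cap V_\alpha$ and $(v,w)\in E'$ for $v\in Y_Z\cap V_{\overline{\alpha}}$; return all bottom strongly connected components of $H$ that contain at least one edge of $H$, each with witness strategy $\sigma$ restricted to it. $\mathtt{search}(\mathcal{G},T)$: repeat forever: set $r:=\emptyset$ (a partial function $V\to\mathbb{N}$) and $Y:=\emptyset$; while $V\setminus\mathrm{dom}(r)\neq\emptyset$: let $\mathcal{G}':=\mathcal{G}\setminus\mathrm{dom}(r)$ with vertex set $V'$, $T':=T\cap\mathcal{G}'$, $p:=\mathrm{pr}(\mathcal{G}')$, $\alpha:=p\bmod 2$; compute $(Z,\sigma):=\mathit{TAttr}^{\mathcal{G}',T'}_\alpha(\mathrm{pr}^{-1}(p)\cap V')$; let $A:=$ extract-tangles$(Z,\sigma)$; if some $t\in A$ has $E_T(t)=\emptyset$ with $E_T$ computed in $\mathcal{G}$, return $(T\cup Y,t)$; otherwise set $r(v):=p$ for all $v\in Z$ and $Y:=Y\cup A$. After the while-loop, set $T:=T\cup Y$. $\mathtt{solve}(\mathcal{G})$: set $W_0=W_1=\emptyset$, $\sigma_0=\sigma_1=\emptyset$, $T=\emptyset$;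 while $\mathcal{G}$ has a vertex: $(T,d):=\mathtt{search}(\mathcal{G},T)$; $\alpha:=\mathrm{pr}(d)\bmod 2$; $(D,\sigma):=\mathit{Attr}^{\mathcal{G}}_\alpha(d)$; $W_\alpha:=W_\alpha\cup D$; $\sigma_\alpha:=\sigma_\alpha\cup\sigma_T(d)\cup\sigma$; $\mathcal{G}:=\mathcal{G}\setminus D$; $T:=$ the tangles of $T$ contained in the remaining vertex set. Finally return $W_0,W_1,\sigma_0,\sigma_1$. *)

(* Defs.v *)
From mathcomp Require Import all_boot.
Set Implicit Arguments. Unset Strict Implicit. Unset Printing Implicit Defensive.

(* Players are booleans: false = Even (0), true = Odd (1).
   owner v = true  <->  v \in V_1.  The parity of priority p is odd p. *)
Record game (V : finType) := Game {
  owner : V -> bool;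
  edge  : rel V;
  prio  : V -> nat }.

Definition strat (V : finType) := V -> option V.

Record tangle (V : finType) := Tangle { tverts : {set V}; tstrat : strat V }.

Section Algorithm.
Variable V : finType.
Variable G : game V.
(* arbitrary choice function, used to resolve the choice of "a successor
   already in Z" in attractor computations *)
Variable sel : {set V} -> V.

Definition prmax (U : {set V}) : nat := \max_(v in U) prio G v.
Definition tparity (t : tangle V) : bool := odd (prmax (tverts t)).

Definition escapes (S : {set V}) (t : tangle V) : {set V} :=
  [set v in S | (v \notin tverts t) &&
     [exists u in tverts t, (owner G u == ~~ tparity t) && edge G u v]].

Definition succ_in (S Z : {set V}) (v : V) : {set V} :=
  [set w in S | edge G v w && (w \in Z)].

Definition std_step (S : {set V}) (a : bool) (zs : {set V} * strat V)
  : {set V} * strat V :=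
  let: (Z, s) := zs in
  let Z' := Z :|: [set v in S | if owner G v == a then succ_in S Z v != set0
                   else [forall w in S, edge G v w ==> (w \in Z)]] in
  (Z', fun v => if s v is Some w then Some w else
        if (owner G v == a) && (v \in Z') && (succ_in S Z v != set0)
        then Some (sel (succ_in S Z v)) else None).

Definition tangle_step (S : {set V}) (a : bool) (T : seq (tangle V))
  (zs : {set V} * strat V) : {set V} * strat V :=
  foldl (fun (zs : {set V} * strat V) (t : tangle V) =>
     let: (Z, s) := zs in
     if [&& tparity t == a, tverts t \subset S, ~~ (tverts t \subset Z),
            escapes S t != set0 & escapes S t \subset Z]
     then (Z :|: tverts t, fun v => if s v is Some w then Some w else
             if (v \in tverts t) && (owner G v == a) then tstrat t v else None)
     else (Z, s)) zs T.

(* tangle attractor TAttr^{S,T}_a(A) in the subgame S, with its strategy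
   (iterated enough times to reach the least fixpoint) *)
Definition tattr (S : {set V}) (a : bool) (T : seq (tangle V)) (A : {set V})
  : {set V} * strat V :=
  iter #|V|.+2 (fun zs => tangle_step S a T (std_step S a zs))
       (A, fun _ => None).

Definition attr (S : {set V}) (a : bool) (A : {set V}) := tattr S a [::] A.

Definition ystep (S : {set V}) (a : bool) (s : strat V) (X : {set V}) : {set V} :=
  [set v in X | if owner G v == a then (if s v is Some w then w \in X else false)
                else [forall w in S, edge G v w ==> (w \in X)]].

(* greatest such X contained in Z *)
Definition Yz (S : {set V}) (a : bool) (Z : {set V}) (s : strat V) : {set V} :=
  iter #|V|.+1 (ystep S a s) Z.

Definition hrel (S : {set V}) (a : bool) (s : strat V) (Y : {set V}) : rel V :=
  fun x y => [&& x \in Y, y \in Y &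
     if owner G x == a then s x == Some y else edge G x y && (y \in S)].

Definition extract (S : {set V}) (a : bool) (Z : {set V}) (s : strat V)
  : seq (tangle V) :=
  let Y := Yz S a Z s in
  let h := hrel S a s Y in
  let comp v := [set w | connect h v w && connect h w v] in
  let bottom v := [forall w, connect h v w ==> connect h w v] in
  let cs := undup [seq comp v | v <- enum Y &
                    bottom v && [exists x in comp v, exists y in comp v, h x y]] in
  [seq Tangle C (fun u => if u \in C then s u else None) | C <- cs].

Inductive sres := Found of seq (tangle V) & tangle V | Done of seq (tangle V).

(* the inner while-loop of search(S, T); R = dom(r); fuel n *)
Fixpoint inner (S : {set V}) (n : nat) (T : seq (tangle V)) (R : {set V})
  (Y : seq (tangle V)) : option sres :=
  match n with
  | 0 => None
  | n'.+1 =>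
    let S' := S :\: R in
    if S' == set0 then Some (Done Y) else
    let T' := [seq t <- T | tverts t \subset S'] in
    let p := prmax S' in
    let a := odd p in
    let: (Z, s) := tattr S' a T' [set v in S' | prio G v == p] in
    let A := extract S' a Z s in
    match [seq t <- A | escapes S t == set0] with
    | t :: _ => Some (Found (T ++ Y) t)
    | [::] => inner S n' T (R :|: Z) (Y ++ A)
    end
  end.

Fixpoint search (n : nat) (S : {set V}) (T : seq (tangle V))
  : option (seq (tangle V) * tangle V) :=
  match n with
  | 0 => None
  | n'.+1 =>
    match inner S n T set0 [::] with
    | None => None
    | Some (Found T' t) => Some (T', t)
    | Some (Done Y) => search n' S (T ++ Y)
    end
  end.

Record result := Result { W0 : {set V}; W1 : {set V}; s0 : strat V; s1 : strat V }.

Definition sunion (f g : strat V) : strat V :=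
  fun v => if f v is Some w then Some w else g v.

Fixpoint solve_loop (n : nat) (S : {set V}) (T : seq (tangle V))
  (W : bool -> {set V}) (sg : bool -> strat V) : option result :=
  match n with
  | 0 => None
  | n'.+1 =>
    if S == set0 then Some (Result (W false) (W true) (sg false) (sg true)) else
    match search n S T with
    | None => None
    | Some (T', d) =>
      let a := tparity d in
      let: (D, s) := attr S a (tverts d) in
      let W' := fun b => if b == a then W b :|: D else W b in
      let sg' := fun b => if b == a then sunion (sg b) (sunion (tstrat d) s)
                          else sg b in
      let S' := S :\: D in
      solve_loop n' S' [seq t <- T' | tverts t \subset S'] W' sg'
    end
  end.

(* solve(G) run with fuel n: None means "not finished within fuel n" *)
Definition solve (n : nat) : option result :=
  solve_loop n setT [::] (fun _ => set0) (fun _ _ => None).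

Definition is_strategy (a : bool) (s : strat V) : Prop :=
  forall v w, s v = Some w -> owner G v = a /\ edge G v w.

Definition play (p : nat -> V) : Prop := forall i, edge G (p i) (p i.+1).

Definition consistent (s : strat V) (p : nat -> V) : Prop :=
  forall i w, s (p i) = Some w -> p i.+1 = w.

(* the highest priority occurring infinitely often has parity a *)
Definition won_by (a : bool) (p : nat -> V) : Prop :=
  exists m, odd m = a /\
    (forall N, exists2 i, N <= i & prio G (p i) = m) /\
    (exists N, forall i, N <= i -> prio G (p i) <= m).

Definition wins_from (a : bool) (s : strat V) (v : V) : Prop :=
  forall p, play p -> p 0 = v -> consistent s p -> won_by a p.

Definition won_vertex (a : bool) (v : V) : Prop :=
  exists s, is_strategy a s /\ wins_from a s v.

Definition solution (r : result) : Prop :=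
  [/\ W0 r :|: W1 r = setT, W0 r :&: W1 r = set0,
      is_strategy false (s0 r) /\ is_strategy true (s1 r),
      (forall v, v \in W0 r -> wins_from false (s0 r) v) /\
      (forall v, v \in W1 r -> wins_from true (s1 r) v) &
      (forall v, v \in W0 r <-> won_vertex false v) /\
      (forall v, v \in W1 r <-> won_vertex true v)].
End Algorithm.

(* Main.v *)
Require Import Defs.
From mathcomp Require Import all_boot zify.
From Stdlib Require Import Classical ClassicalEpsilon.
Set Implicit Arguments. Unset Strict Implicit. Unset Printing Implicit Defensive.

Section Generic.
Variable V : finType.
Variable G : game V.

Definition mp (s : seq V) := \max_(v <- s) prio G v.
Definition cw (e : rel V) (x : V) (s : seq V) :=
  [&& s != [::], path e x s & last x s == x].

Lemma mp_ub v s : v \in s -> prio G v <= mp s.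
Proof. by move=> H; apply: (@leq_bigmax_seq _ s xpredT). Qed.

Lemma mp_le s m : (forall v, v \in s -> prio G v <= m) -> mp s <= m.
Proof. by move=> H; apply/bigmax_leqP_seq => i Hi _; apply: H. Qed.

Lemma walk_all (e : rel V) (P Q : V -> bool) x s :
  path e x s -> all Q (x :: s) ->
  (forall u v, e u v -> Q u -> Q v -> P u -> P v) -> P x -> all P (x :: s).
Proof.
elim: s x => [|y s IH] x /=; first by move=> _ _ _ ->.
case/andP=> exy ps /and3P[Qx Qy Qs] Hc Px.
rewrite Px /=; apply: (IH y ps) => //=; first by rewrite Qy.
exact: Hc exy Qx Qy Px.
Qed.

Lemma walk_last (e : rel V) (P Q : V -> bool) x s y :
  path e x s -> all Q (x :: s) ->
  (forall u v, e u v -> Q u -> Q v -> P u -> P v) ->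
  y \in x :: s -> P y -> P (last x s).
Proof.
elim: s x y => [|z s IH] x y /=.
  by move=> _ _ _; rewrite inE => /eqP -> .
case/andP=> exz ps /and3P[Qx Qz Qs] Hc.
rewrite inE => /orP[/eqP-> Px|Hy Py].
  apply: (IH z z ps) => //=; first by rewrite Qz.
    exact: mem_head.
  exact: Hc exz Qx Qz Px.
by apply: (IH z y ps) => //=; rewrite Qz.
Qed.

Lemma cw_all (e : rel V) (P Q : V -> bool) x s y :
  cw e x s -> all Q (x :: s) ->
  (forall u v, e u v -> Q u -> Q v -> P u -> P v) ->
  y \in x :: s -> P y -> all P (x :: s).
Proof.
case/and3P=> _ ps /eqP lx AQ Hc Hy Py.
apply: (walk_all ps AQ Hc).
by rewrite -{1}lx; exact: (walk_last ps AQ Hc Hy Py).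
Qed.

Lemma path_sub (e1 e2 : rel V) (P : V -> bool) x s :
  (forall u v, P u -> P v -> e1 u v -> e2 u v) ->
  all P (x :: s) -> path e1 x s -> path e2 x s.
Proof.
move=> H; elim: s x => [|y s IH] x //= /and3P[Px Py Ps] /andP[e ps].
by rewrite (H _ _ Px Py e) IH //= Py.
Qed.

Lemma cw_sub (e1 e2 : rel V) (P : V -> bool) x s :
  (forall u v, P u -> P v -> e1 u v -> e2 u v) ->
  all P (x :: s) -> cw e1 x s -> cw e2 x s.
Proof.
move=> H AP /and3P[ne ps lx]; rewrite /cw ne lx andbT.
exact: path_sub H AP ps.
Qed.

Lemma cw_in (e : rel V) (P : V -> bool) x s :
  (forall u v, e u v -> P u && P v) -> cw e x s -> all P (x :: s).
Proof.
move=> H /and3P[]; case: s => [|y s] //= _ /andP[exy ps] _.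
case/andP: (H _ _ exy) => -> Py /=; clear exy.
elim: s y Py ps => [|z s IH] y Py //=; first by rewrite Py.
case/andP=> eyz ps; rewrite Py /=; apply: IH ps.
by case/andP: (H _ _ eyz).
Qed.

Fixpoint seg (p : nat -> V) (i n : nat) : seq V :=
  if n is n'.+1 then p i.+1 :: seg p i.+1 n' else [::].

Lemma seg_path (e : rel V) p i n :
  (forall k, i <= k -> k < i + n -> e (p k) (p k.+1)) -> path e (p i) (seg p i n).
Proof.
elim: n i => [|n IH] i H //=.
rewrite H ?leqnn ?addnS ?ltnS ?leq_addr //=.
apply: IH => k H1 H2; apply: H; lia.
Qed.

Lemma seg_last p i n : last (p i) (seg p i n) = p (i + n).
Proof. by elim: n i => [|n IH] i /=; rewrite ?addn0 // IH addSnnS. Qed.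

Lemma seg_mem p i n v : v \in p i :: seg p i n -> exists2 k, i <= k <= i + n & v = p k.
Proof.
elim: n i => [|n IH] i /=.
  by rewrite inE => /eqP->; exists i => //; rewrite addn0 leqnn.
rewrite inE => /orP[/eqP->|/IH[k Hk ->]]; first by exists i => //; lia.
by exists k => //; lia.
Qed.

Lemma seg_mem' p i n k : i <= k <= i + n -> p k \in p i :: seg p i n.
Proof.
elim: n i => [|n IH] i /=.
  by rewrite addn0 -eqn_leq => /eqP->; rewrite mem_head.
move=> H; case: (ltngtP i k) => Hik.
- by rewrite inE IH ?orbT //; lia.
- lia.
- by rewrite Hik mem_head.
Qed.

Lemma pigeon (f : nat -> V) : exists i j, i < j /\ f i = f j.
Proof.
apply: NNPP => Hn.
have inj : injective (fun i : 'I_#|V|.+1 => f i).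
  move=> i j Hij; apply/val_inj => /=.
  case: (ltngtP i j) => // H; case: Hn.
    by exists i, j.
  by exists j, i.
by have := leq_card _ inj; rewrite card_ord ltnn.
Qed.

Definition asb (P : Prop) : bool := if excluded_middle_informative P then true else false.
Lemma asbP (P : Prop) : reflect P (asb P).
Proof. by rewrite /asb; case: excluded_middle_informative => H; constructor. Qed.

Definition inf_occ (p : nat -> V) v := forall M, exists2 k, M <= k & p k = v.

Lemma eventual (p : nat -> V) :
  exists N, forall v, inf_occ p v \/ (forall i, N <= i -> p i != v).
Proof.
suff H : forall l : seq V, exists N, forall v, v \in l ->
    inf_occ p v \/ (forall i, N <= i -> p i != v).
  case: (H (enum V)) => N HN; exists N => v; apply: HN; by rewrite mem_enum.
elim=> [|x l [N HN]]; first by exists 0.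
case: (classic (inf_occ p x)) => Hx.
  exists N => v; rewrite inE => /orP[/eqP->|]; [by left|exact: HN].
have [M HM] : exists M, forall k, M <= k -> p k != x.
  apply: NNPP => H1; apply: Hx => M; apply: NNPP => H2; apply: H1.
  exists M => k Hk; apply/eqP => E; apply: H2; by exists k.
exists (maxn N M) => v; rewrite inE => /orP[/eqP->|/HN[H|H]].
- by right => i Hi; apply: HM; lia.
- by left.
- by right => i Hi; apply: H; lia.
Qed.

Lemma walk_won (e : rel V) a (p : nat -> V) N :
  (forall x s, cw e x s -> odd (mp (x :: s)) = a) ->
  (forall i, N <= i -> e (p i) (p i.+1)) -> won_by G a p.
Proof.
move=> Hc He.
have [N0 HN0] := eventual p.
pose N1 := maxn N N0.
have Hocc : forall i, N1 <= i -> inf_occ p (p i).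
  move=> i Hi; case: (HN0 (p i)) => // H; move: (H i); rewrite eqxx => H'.
  by have := H' ltac:(lia).
pose I := [set v | asb (inf_occ p v)].
have HI : forall i, N1 <= i -> p i \in I.
  by move=> i Hi; rewrite inE; apply/asbP; apply: Hocc.
have [x Hx Hm] : {x | x \in I & \max_(v in I) prio G v = prio G x}.
  apply: eq_bigmax_cond; apply/card_gt0P; exists (p N1); exact: HI.
have xinf : inf_occ p x by move: Hx; rewrite inE => /asbP.
have Hub : forall i, N1 <= i -> prio G (p i) <= prio G x.
  by move=> i Hi; rewrite -Hm; apply: leq_bigmax_cond; apply: HI.
exists (prio G x); split; last split.
- have [i1 Hi1 E1] := xinf N1.
  have [i2 Hi2 E2] := xinf i1.+1.
  have Hcw : cw e (p i1) (seg p i1 (i2 - i1)).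
    rewrite /cw seg_last subnKC; last lia.
    rewrite E2 -E1 eqxx andbT.
    apply/andP; split; first by case: (i2 - i1) (ltac:(lia) : 0 < i2 - i1).
    apply: seg_path => k Hk _; apply: He; lia.
  have := Hc _ _ Hcw; rewrite E1 => <-; congr odd.
  apply/eqP; rewrite eqn_leq; apply/andP; split.
    by apply: mp_ub; rewrite mem_head.
  apply: mp_le => v; rewrite -{1}E1 => /seg_mem[k Hk ->]; apply: Hub; lia.
- by move=> M; have [k Hk Ek] := xinf M; exists k => //; rewrite Ek.
- by exists N1.
Qed.

Lemma won_shift a (p : nat -> V) i : won_by G a (fun k => p (i + k)) -> won_by G a p.
Proof.
case=> m [Hm [Hinf [N HN]]]; exists m; split => //; split.
  move=> M; have [k Hk Ek] := Hinf M; exists (i + k) => //; lia.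
exists (i + N) => j Hj; have := HN (j - i); rewrite subnKC; last lia.
by apply; lia.
Qed.

Lemma won_excl (p : nat -> V) : won_by G false p -> won_by G true p -> False.
Proof.
case=> m0 [o0 [I0 [N0 H0]]] [m1 [o1 [I1 [N1 H1]]]].
have [k0 Hk0 E0] := I0 (maxn N0 N1).
have [k1 Hk1 E1] := I1 (maxn N0 N1).
have : m0 <= m1 by rewrite -E0; apply: H1; lia.
have : m1 <= m0 by rewrite -E1; apply: H0; lia.
move=> a b; have E : m0 = m1 by lia.
by move: o0; rewrite E o1.
Qed.

End Generic.


Section Attr.
Variable V : finType.
Variable G : game V.
Variable sel : {set V} -> V.
Hypothesis Hsel : forall A : {set V}, A != set0 -> sel A \in A.

Fixpoint inT (t : tangle V) (T : seq (tangle V)) : Prop :=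
  if T is t' :: T' then t = t' \/ inT t T' else False.

Lemma inT_cat t T1 T2 : inT t (T1 ++ T2) <-> inT t T1 \/ inT t T2.
Proof. elim: T1 => [|u T1 IH] /=; first by intuition. rewrite IH; tauto. Qed.

Lemma inT_filter t (p : pred (tangle V)) T : inT t (filter p T) <-> inT t T /\ p t.
Proof.
elim: T => [|u T IH] /=; first by intuition.
case: ifP => pu /=; rewrite IH; split.
- by case=> [->|[H pt]]; split=> //; [left|right].
- by case=> [[->|H] pt]; [left|right].
- by case=> H pt; split=> //; right.
- by case=> [[E|H] pt]; [move: pu; rewrite -E pt|].
Qed.

Lemma inT_map t (f : {set V} -> tangle V) (cs : seq {set V}) :
  inT t (map f cs) -> exists2 C, C \in cs & t = f C.
Proof.
elim: cs => [|C cs IH] //= [->|/IH[D HD ->]]; first by exists C; rewrite ?mem_head.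
by exists D; rewrite // inE HD orbT.
Qed.

Definition ext (s s' : strat V) := forall v w, s v = Some w -> s' v = Some w.

Definition ht (t : tangle V) : rel V := fun x y =>
  [&& x \in tverts t, y \in tverts t &
      if owner G x == tparity G t then tstrat t x == Some y else edge G x y].

Definition TT1 (t : tangle V) := forall v w, tstrat t v = Some w ->
  [/\ v \in tverts t, owner G v = tparity G t, edge G v w & w \in tverts t].
Definition TT2 (t : tangle V) :=
  forall v, v \in tverts t -> owner G v = tparity G t -> tstrat t v != None.

Definition TH (T : seq (tangle V)) a (Q : V -> seq V -> Prop) :=
  forall t, inT t T -> tparity G t = a ->
    [/\ TT1 t, TT2 t & forall x s, cw (ht t) x s -> Q x s].

Definition Inv (S : {set V}) a (A : {set V}) (Q : V -> seq V -> Prop) (Z : {set V}) (s : strat V) :=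
  [/\ A \subset Z /\ Z \subset S,
   (forall v w, s v = Some w -> [/\ v \in Z, owner G v = a, edge G v w & w \in Z]),
   (forall v, v \in Z -> v \notin A -> owner G v = a -> s v != None),
   (forall v w, v \in Z -> v \notin A -> owner G v != a -> w \in S -> edge G v w -> w \in Z) &
   (forall x s', cw (hrel G S a s Z) x s' -> all (fun v => v \notin A) (x :: s') -> Q x s')].

Lemma hrel_in S a s Z u v : hrel G S a s Z u v -> (u \in Z) && (v \in Z).
Proof. by case/and3P=> -> ->. Qed.

Lemma old_part S a A Q Z s (Z2 : {set V}) s2 (x : V) (s' : seq V) : Inv S a A Q Z s -> Z \subset Z2 -> ext s s2 ->
  cw (hrel G S a s2 Z2) x s' -> all (fun v => v \notin A) (x :: s') ->
  has (fun v => v \in Z) (x :: s') -> Q x s'.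
Proof.
move=> [[AZ ZS] I2 I3 I4 I5] ZZ2 ex Hcw HA /hasP[y Hy yZ].
have clo : forall u v, hrel G S a s2 Z2 u v -> u \notin A -> v \notin A -> u \in Z -> v \in Z.
  move=> u v /and3P[_ _] + uA vA uZ; case: ifP => [/eqP oa /eqP E|oa /andP[e vS]].
    case E': (s u) => [w|]; last by have := I3 u uZ uA oa; rewrite E'.
    by move: (ex _ _ E'); rewrite E => -[->]; case: (I2 _ _ E').
  by apply: (I4 u) => //; apply/negbT.
have AZ' := cw_all Hcw HA clo Hy yZ.
have AP : all (fun v => (v \in Z) && (v \notin A)) (x :: s').
  by apply/allP=> v Hv; rewrite (allP AZ' v Hv) (allP HA v Hv).
apply: I5 => //; apply: (cw_sub _ AP Hcw) => u v /andP[uZ uA] /andP[vZ _] /and3P[_ _].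
rewrite /hrel uZ vZ /=; case: ifP => [/eqP oa /eqP E|//].
case E': (s u) => [w|]; last by have := I3 u uZ uA oa; rewrite E'.
by move: (ex _ _ E'); rewrite E => -[->].
Qed.


Lemma std_inv S a A Q Z s : Inv S a A Q Z s ->
  [/\ Inv S a A Q (std_step G sel S a (Z, s)).1 (std_step G sel S a (Z, s)).2,
      Z \subset (std_step G sel S a (Z, s)).1 & ext s (std_step G sel S a (Z, s)).2].
Proof.
move=> Hinv; have Hinv' := Hinv; move: Hinv' => [[AZ ZS] I2 I3 I4 I5].
rewrite /std_step /=.
set N := [set v in S | _].
set s2 := fun v => _.
have ZZ2 : Z \subset Z :|: N by apply: subsetUl.
have ext2 : ext s s2 by move=> v w; rewrite /s2 => ->.
have s2P : forall v w, s2 v = Some w -> s v = Some w \/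
    [/\ s v = None, owner G v = a, v \in Z :|: N & w \in succ_in G S Z v].
  move=> v w; rewrite /s2; case E: (s v) => [u|]; first by left.
  case: ifP => // /andP[/andP[/eqP oa vZ] ne] [<-]; right; split => //; exact: Hsel.
have NP : forall v, v \in N -> v \in S /\ (if owner G v == a then succ_in G S Z v != set0
                   else [forall w in S, edge G v w ==> (w \in Z)]).
  by move=> v; rewrite inE => /andP[].
split => //; split.
- by split; [exact: subset_trans AZ ZZ2|apply/subsetP=> v; rewrite inE => /orP[/(subsetP ZS)|/NP[]]].
- move=> v w /s2P [/I2[vZ oa e wZ]|[_ oa vZ]]; first by rewrite !inE vZ wZ.
  by rewrite /succ_in inE => /andP[wS /andP[e wZ]]; split => //; rewrite inE wZ.
- move=> v vZ2 vA oa; rewrite /s2; case E: (s v) => [u|] //.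
  case/setUP: (vZ2) => [vZ|/NP[vS]]; first by have := I3 v vZ vA oa; rewrite E.
  by rewrite oa eqxx vZ2 => ->.
- move=> v w vZ2 vA oa wS e; case/setUP: vZ2 => [vZ|/NP[vS]].
    by rewrite inE (I4 v w).
  rewrite (negbTE oa) => /forall_inP/(_ w wS); rewrite e /= => wZ.
  by rewrite inE wZ.
- move=> x s' Hcw HA; case: (boolP (has (fun v => v \in Z) (x :: s'))) => Hh.
    exact: old_part Hinv ZZ2 ext2 Hcw HA Hh.
  move: Hh; rewrite -all_predC => /allP HnZ.
  case/and3P: (Hcw) => + + _; case: s' Hcw HA HnZ => [|y s''] // Hcw HA HnZ _ /= /andP[+ _].
  case/and3P=> xZ2 yZ2; case: ifP => [/eqP oa /eqP /s2P|oa /andP[e yS]].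
    case=> [/I2[xZ _ _ _]|[_ _ _]].
      by have := HnZ x (mem_head _ _); rewrite /= xZ.
    rewrite /succ_in inE => /andP[_ /andP[_ yZ]].
    by have := HnZ y; rewrite inE mem_head orbT /= yZ => /(_ isT).
  case/setUP: xZ2 => [xZ|/NP[xS]].
    by have := HnZ x (mem_head _ _); rewrite /= xZ.
  rewrite oa => /forall_inP/(_ y yS); rewrite e /= => yZ.
  by have := HnZ y; rewrite inE mem_head orbT /= yZ => /(_ isT).
Qed.

Lemma tstep_inv S a A Q Z s (t : tangle V) :
  Inv S a A Q Z s -> tparity G t = a -> tverts t \subset S ->
  escapes G S t \subset Z -> TT1 t -> TT2 t -> (forall x s, cw (ht t) x s -> Q x s) ->
  Inv S a A Q (Z :|: tverts t)
    (fun v => if s v is Some w then Some w else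
              if (v \in tverts t) && (owner G v == a) then tstrat t v else None).
Proof.
move=> Hinv; have Hinv' := Hinv; move: Hinv' => [[AZ ZS] I2 I3 I4 I5] ta tS eZ T1 T2 T3.
set Z2 := Z :|: tverts t; set s2 := fun v => _.
have ZZ2 : Z \subset Z2 by apply: subsetUl.
have ext2 : ext s s2 by move=> v w; rewrite /s2 => ->.
have s2P : forall v w, s2 v = Some w -> s v = Some w \/
    [/\ s v = None, v \in tverts t, owner G v = a & tstrat t v = Some w].
  move=> v w; rewrite /s2; case E: (s v) => [u|]; first by left.
  by case: ifP => // /andP[vt /eqP oa] E'; right.
split.
- split; first exact: subset_trans AZ ZZ2.
  by apply/subsetP=> v /setUP[/(subsetP ZS)|/(subsetP tS)].
- move=> v w /s2P [/I2[vZ oa e wZ]|[_ vt oa /T1[_ _ e wt]]].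
    by split => //; rewrite /Z2 inE ?vZ ?wZ.
  by split => //; rewrite /Z2 inE ?vt ?wt ?orbT.
- move=> v vZ2 vA oa; rewrite /s2; case E: (s v) => [u|] //.
  case/setUP: (vZ2) => [vZ|vt]; first by have := I3 v vZ vA oa; rewrite E.
  by rewrite vt oa eqxx /=; apply: T2 => //; rewrite oa ta.
- move=> v w vZ2 vA oa wS e; case/setUP: vZ2 => [vZ|vt].
    by rewrite inE (I4 v w).
  case: (boolP (w \in tverts t)) => wt; first by rewrite inE wt orbT.
  rewrite inE (subsetP eZ) //.
  rewrite /escapes inE wS wt /=; apply/existsP; exists v.
  by rewrite vt e andbT /= ta; move: oa; case: (owner G v); case: (a).
- move=> x s' Hcw HA; case: (boolP (has (fun v => v \in Z) (x :: s'))) => Hh.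
    exact: old_part Hinv ZZ2 ext2 Hcw HA Hh.
  move: Hh; rewrite -all_predC => /allP HnZ.
  have HZ2 := cw_in (@hrel_in S a s2 Z2) Hcw.
  have AP : all (fun v => (v \in tverts t) && (v \notin Z)) (x :: s').
    apply/allP=> v Hv; have := HnZ v Hv; have := allP HZ2 v Hv.
    by rewrite /= inE => /orP[->|->].
  apply: T3; apply: (cw_sub _ AP Hcw) => u v /andP[ut uZ] /andP[vt _] /and3P[_ _].
  rewrite /ht ut vt /= ta; case: ifP => [/eqP oa /eqP /s2P[/I2[uZ' _ _ _]|[_ _ _ ->]] //|_ /andP[] //].
  by rewrite uZ' in uZ.
Qed.

Lemma fold_inv S a A Q T : TH T a Q -> forall Z s, Inv S a A Q Z s ->
  [/\ Inv S a A Q (tangle_step G S a T (Z, s)).1 (tangle_step G S a T (Z, s)).2,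
      Z \subset (tangle_step G S a T (Z, s)).1, ext s (tangle_step G S a T (Z, s)).2 &
      forall t, inT t T -> tparity G t = a -> tverts t \subset S ->
        escapes G S t != set0 -> escapes G S t \subset Z ->
        tverts t \subset (tangle_step G S a T (Z, s)).1].
Proof.
elim: T => [|t T IH] TH0 Z s Hinv.
  by split => //; try exact: subxx; move=> v w ->.
have TH1 : TH T a Q by move=> u Hu; apply: TH0; right.
rewrite /tangle_step /=.
case: ifP => cond.
- case/and5P: (cond) => /eqP ta tS _ _ eZ.
  case: (TH0 t (or_introl erefl) ta) => T1 T2 T3.
  have Hinv2 := tstep_inv Hinv ta tS eZ T1 T2 T3.
  case: (IH TH1 _ _ Hinv2) => I' sub' ext' Hf.
  split => //.
  + exact: subset_trans (subsetUl _ _) sub'.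
  + by move=> v w E; apply: ext'; rewrite E.
  + move=> u [->|Hu] ua uS ne ueZ.
      exact: subset_trans (subsetUr _ _) sub'.
    apply: Hf => //; exact: subset_trans ueZ (subsetUl _ _).
- case: (IH TH1 _ _ Hinv) => I' sub' ext' Hf.
  split => // u [->|Hu] ua uS ne ueZ; last exact: Hf.
  move: cond; rewrite ua eqxx uS ne ueZ /= andbT => /negbFE tZ.
  exact: subset_trans tZ sub'.
Qed.

Definition Fix (S : {set V}) a (T : seq (tangle V)) (Z : {set V}) (s : strat V) :=
  [/\ (forall v, v \in S -> owner G v = a -> succ_in G S Z v != set0 -> v \in Z /\ s v != None),
      (forall v, v \in S -> owner G v != a -> [forall w in S, edge G v w ==> (w \in Z)] -> v \in Z) &
      (forall t, inT t T -> tparity G t = a -> tverts t \subset S ->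
        escapes G S t != set0 -> escapes G S t \subset Z -> tverts t \subset Z)].

Definition FF (S : {set V}) a (T : seq (tangle V)) (zs : {set V} * strat V) := tangle_step G S a T (std_step G sel S a zs).

Lemma FF_inv S a A Q T Z s : TH T a Q -> Inv S a A Q Z s ->
  [/\ Inv S a A Q (FF S a T (Z, s)).1 (FF S a T (Z, s)).2,
      Z \subset (FF S a T (Z, s)).1 & ext s (FF S a T (Z, s)).2].
Proof.
move=> TH0 Hinv; case: (std_inv Hinv); rewrite /FF.
case: (std_step G sel S a (Z, s)) => Z1 s1 /= Hinv1 sub1 ext1.
case: (fold_inv TH0 Hinv1) => I' sub' ext' _; split => //.
  exact: subset_trans sub1 sub'.
by move=> v w /ext1 /ext'.
Qed.

Lemma FF_same S a A Q T Z s : TH T a Q -> Inv S a A Q Z s ->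
  (FF S a T (Z, s)).1 = Z -> Fix S a T (FF S a T (Z, s)).1 (FF S a T (Z, s)).2.
Proof.
move=> TH0 Hinv; case: (std_inv Hinv); rewrite /FF.
have Hstd : forall v, v \in S -> (if owner G v == a then succ_in G S Z v != set0
                   else [forall w in S, edge G v w ==> (w \in Z)]) ->
    v \in (std_step G sel S a (Z, s)).1 /\
    (owner G v = a -> (std_step G sel S a (Z, s)).2 v != None).
  move=> v vS Hc; rewrite /std_step /=.
  have vZ1 : v \in Z :|: [set v in S | if owner G v == a then succ_in G S Z v != set0
                   else [forall w in S, edge G v w ==> (w \in Z)]].
    by rewrite !inE vS Hc orbT.
  split => // oa; case: (s v) => // ; rewrite vZ1 oa eqxx /=.
  by move: Hc; rewrite oa eqxx => ->.
case: (std_step G sel S a (Z, s)) Hstd => Z1 s1 /= Hstd Hinv1 sub1 ext1.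
case: (fold_inv TH0 Hinv1) => I' sub' ext' Hf Efin.
have E1 : Z1 = Z.
  by have H := sub'; rewrite Efin in H; apply/eqP; rewrite eqEsubset H sub1.
subst Z1; rewrite Efin; split.
- move=> v vS oa ne; have [] := Hstd v vS; first by rewrite oa eqxx.
  move=> -> /(_ oa); case E: (s1 v) => [w|] // _.
  by rewrite (ext' _ _ E).
- by move=> v vS oa fa; have [] := Hstd v vS; first by rewrite (negbTE oa).
- by move=> t Ht ta tS ne eZ; rewrite -Efin; apply: Hf.
Qed.

Lemma fold_nochange (S : {set V}) (a : bool) (T : seq (tangle V)) (Z : {set V}) (s : strat V) :
  (forall t, inT t T -> ~~ [&& tparity G t == a, tverts t \subset S, ~~ (tverts t \subset Z),
            escapes G S t != set0 & escapes G S t \subset Z]) ->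
  (tangle_step G S a T (Z, s)).1 = Z.
Proof.
elim: T s => [|t T IH] s //= H.
rewrite /tangle_step /=; rewrite (negbTE (H t (or_introl erefl))).
by apply: IH => u Hu; apply: H; right.
Qed.

Lemma Fix_F (S : {set V}) a (T : seq (tangle V)) (Z : {set V}) (s : strat V) : Z \subset S -> Fix S a T Z s -> (FF S a T (Z, s)).1 = Z.
Proof.
move=> ZS [F1 F2 F3]; rewrite /FF /std_step /=.
set N := [set v in S | _].
have -> : Z :|: N = Z.
  apply/setUidPl/subsetP => v; rewrite inE => /andP[vS].
  case: ifP => [/eqP oa ne|/negbT oa fa]; first by case: (F1 v vS oa ne).
  exact: F2.
apply: fold_nochange => t Ht; apply/negP => /and5P[/eqP ta tS ntZ ne eZ].
by move: ntZ; rewrite (F3 t Ht ta tS ne eZ).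
Qed.

Lemma Inv_init (S : {set V}) a (A : {set V}) Q : A \subset S -> Inv S a A Q A (fun _ => None).
Proof.
move=> AS; split => //.
- by move=> v vA; rewrite vA.
- by move=> v w vA; rewrite vA.
- move=> x s' Hcw HA; have := cw_in (@hrel_in S a (fun _ => None) A) Hcw.
  by move=> /allP /(_ x (mem_head _ _)) xA; move: HA => /allP /(_ x (mem_head _ _)); rewrite xA.
Qed.

Lemma tattr_ok (S : {set V}) a (A : {set V}) Q (T : seq (tangle V)) : A \subset S -> TH T a Q ->
  Inv S a A Q (tattr G sel S a T A).1 (tattr G sel S a T A).2 /\
  Fix S a T (tattr G sel S a T A).1 (tattr G sel S a T A).2.
Proof.
move=> AS TH0.
pose it k := iter k (FF S a T) (A, fun _ => None).
have Hinv : forall k, Inv S a A Q (it k).1 (it k).2.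
  elim=> [|k IH]; first exact: (@Inv_init S a A Q AS).
  rewrite /it iterS -/(it k); case: (it k) IH => Z s IH.
  by case: (FF_inv TH0 IH).
have Hsub : forall k, (it k).1 \subset (it k.+1).1.
  move=> k; rewrite /it iterS -/(it k); have := Hinv k; case: (it k) => Z s IH.
  by case: (FF_inv TH0 IH).
have Hfix : forall k, Fix S a T (it k).1 (it k).2 -> Fix S a T (it k.+1).1 (it k.+1).2.
  move=> k; rewrite /it iterS -/(it k); have := Hinv k; case: (it k) => Z s IH Fx.
  apply: (FF_same TH0 IH); apply: Fix_F Fx; by case: IH => [[]].
have key : forall k, Fix S a T (it k.+1).1 (it k.+1).2 \/ k.+1 <= #|(it k.+1).1|.
  elim=> [|k IH].
  - case: (eqVneq (it 1).1 (it 0).1) => E.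
      left; move: E; rewrite /it /= => E.
      exact: (FF_same TH0 (@Inv_init S a A Q AS) E).
    right; have := Hsub 0; rewrite subEproper eq_sym (negbTE E) /= => /proper_card.
    by apply: leq_ltn_trans.
  - case: IH => [Fx|Hc]; first by left; apply: Hfix.
    case: (eqVneq (it k.+2).1 (it k.+1).1) => E.
      left; rewrite /it iterS -/(it k.+1) in E *; have := Hinv k.+1.
      case: (it k.+1) E => Z s E IH; exact: FF_same TH0 IH E.
    right; have := Hsub k.+1; rewrite subEproper eq_sym (negbTE E) /= => /proper_card.
    by apply: leq_trans.
have : Fix S a T (it #|V|.+2).1 (it #|V|.+2).2.
  case: (key #|V|.+1) => // Hc.
  by have := max_card (it #|V|.+2).1; move: Hc; rewrite /it; lia.
by move=> Fx; change (tattr G sel S a T A) with (it #|V|.+2); split => //; apply: Hinv.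
Qed.
End Attr.


Section Extract.
Variable V : finType.
Variable G : game V.

Lemma shrink_fix (f : {set V} -> {set V}) Z : (forall X, f X \subset X) ->
  f (iter #|V|.+1 f Z) = iter #|V|.+1 f Z /\ iter #|V|.+1 f Z \subset Z.
Proof.
move=> Hf.
have sub : forall k, iter k f Z \subset Z.
  elim=> [|k IH] /=; [exact: subxx | exact: subset_trans (Hf _) IH].
split => //.
have key : forall k, f (iter k f Z) = iter k f Z \/ k + #|iter k f Z| <= #|Z|.
  elim=> [|k [E|Hk]]; [by right | by left; rewrite /= E|].
  case: (eqVneq (f (iter k.+1 f Z)) (iter k.+1 f Z)) => E; first by left.
  right; have : iter k.+1 f Z \proper iter k f Z.
    rewrite /= properEneq Hf andbT; apply/eqP => E'.
    by move: E; rewrite /= E' E' eqxx.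
  move=> /proper_card; lia.
case: (key #|V|.+1) => // Hk.
have := max_card Z; lia.
Qed.

Definition TI (t : tangle V) :=
  [/\ tverts t != set0, TT1 G t, TT2 G t &
      forall x s, cw (ht G t) x s -> odd (mp G (x :: s)) = tparity G t].

Lemma extract_ok (S : {set V}) a (Z : {set V}) s : Z \subset S ->
  (forall v w, s v = Some w -> owner G v = a /\ edge G v w) ->
  (forall x s', cw (hrel G S a s Z) x s' -> odd (mp G (x :: s')) = a) ->
  forall t, inT t (extract G S a Z s) ->
  [/\ TI t, tverts t \subset Z, tparity G t = a & escapes G S t = set0].
Proof.
move=> ZS Hs Hw t; rewrite /extract.
set Y := Yz G S a Z s; set h := hrel G S a s Y.
have [Yfix YZ] : ystep G S a s Y = Y /\ Y \subset Z.
  by apply: shrink_fix => X; apply/subsetP => v; rewrite inE => /andP[].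
have YA : forall v, v \in Y -> owner G v = a -> exists2 w, s v = Some w & w \in Y.
  move=> v vY oa; move: vY; rewrite -{1}Yfix inE => /andP[_]; rewrite oa eqxx.
  by case: (s v) => // w wY; exists w.
have YO : forall v w, v \in Y -> owner G v != a -> w \in S -> edge G v w -> w \in Y.
  move=> v w vY oa wS e; move: vY; rewrite -{1}Yfix inE => /andP[_].
  by rewrite (negbTE oa) => /forall_inP/(_ w wS); rewrite e.
move=> /inT_map [C]; rewrite mem_undup => /mapP [v]; rewrite mem_filter.
move=> /andP[/andP[/forallP bot exy] vY'] -> ->; rewrite mem_enum in vY'.
set C' := [set w | connect h v w & connect h w v].
have vC : v \in C' by rewrite inE connect0.
have CY : forall w, w \in C' -> w \in Y.
  have connY : forall p u, u \in Y -> path h u p -> last u p \in Y.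
    elim=> [|z p IH] u uY //= /andP[huz pz]; apply: IH pz.
    by case/andP: (hrel_in huz).
  by move=> w; rewrite inE => /andP[/connectP[p pp ->] _]; apply: connY.
have Cclo : forall u w, u \in C' -> h u w -> w \in C'.
  move=> u w; rewrite !inE => /andP[vu _] huw.
  have vw : connect h v w by apply: connect_trans vu (connect1 huw).
  by rewrite vw (implyP (bot w) vw).
have CZ : C' \subset Z by apply/subsetP => w /CY /(subsetP YZ).
have hZ : forall u w, h u w -> hrel G S a s Z u w.
  move=> u w /and3P[uY wY c]; by rewrite /hrel (subsetP YZ _ uY) (subsetP YZ _ wY).
have ta : odd (prmax G C') = a.
  have [m mC Em] : {m | m \in C' & \max_(v in C') prio G v = prio G m}.
    by apply: eq_bigmax_cond; apply/card_gt0P; exists v.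
  case/existsP: exy => x /andP[xC /existsP[y /andP[yC hxy]]].
  have cmx : connect h m x.
    move: mC xC; rewrite !inE => /andP[_ mv] /andP[vx _]; exact: connect_trans mv vx.
  have cym : connect h y m.
    move: mC yC; rewrite !inE => /andP[vm _] /andP[_ yv]; exact: connect_trans yv vm.
  case/connectP: cmx => p1 pp1 E1; case/connectP: cym => p2 pp2 E2.
  have Hcw : cw h m (p1 ++ y :: p2).
    rewrite /cw cat_path last_cat /= -E1 -E2 hxy pp1 pp2 eqxx.
    by case: p1 {pp1 E1}.
  have AC : all (fun w => w \in C') (m :: (p1 ++ y :: p2)).
    case/and3P: Hcw => _ pw _; apply: (walk_all (Q := xpredT) pw) => //.
      by apply/allP.
    by move=> u w huw _ _ uC; apply: Cclo huw.
  have := Hw _ _ (cw_sub (P := xpredT) (fun u w _ _ => hZ u w) (introT allP (fun _ _ => isT)) Hcw).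
  rewrite /prmax Em => <-; congr odd; apply/eqP; rewrite eqn_leq; apply/andP; split.
    by apply: mp_ub; rewrite mem_head.
  by apply: mp_le => w /(allP AC) wC; rewrite -Em; apply: leq_bigmax_cond.
have ta' : tparity G {| tverts := C'; tstrat := fun u => if u \in C' then s u else None |} = a
  by [].
split => //.
- split => //=.
  + by apply/set0Pn; exists v.
  + move=> u w; rewrite /tparity /=; case: ifP => // uC E.
    case: (Hs _ _ E) => oa e; split => //; first by rewrite ta.
    have [w' E' w'Y] := YA u (CY u uC) oa; move: E; rewrite E' => -[<-].
    by apply: (Cclo u) => //; rewrite /h /hrel (CY u uC) w'Y oa eqxx E' /=.
  + move=> u uC; rewrite /tparity /= ta => oa; rewrite uC.
    by have [w' -> _] := YA u (CY u uC) oa.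
  + move=> x s' Hcw; rewrite ta'; apply: Hw.
    apply: (cw_sub (P := xpredT) _ (introT allP (fun _ _ => isT)) Hcw) => u w _ _.
    rewrite /ht /hrel /= ta' => /and3P[uC wC]; rewrite uC.
    rewrite (subsetP CZ _ uC) (subsetP CZ _ wC) /=; case: ifP => // _ ->.
    by rewrite (subsetP ZS _ (subsetP CZ _ wC)).
- apply/eqP; rewrite -subset0; apply/subsetP => w.
  rewrite /escapes inE ta' /= => /andP[wS /andP[wC /existsP[u /andP[uC /andP[ou e]]]]].
  have oa : owner G u != a by rewrite (eqP ou); case: (a).
  have wY := YO u w (CY u uC) oa wS e.
  by move: wC; rewrite (Cclo u w uC) // /h /hrel (CY u uC) wY (negbTE oa) e wS.
Qed.

Lemma extract_ne (S : {set V}) a s : S != set0 ->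
  (forall v, v \in S -> exists2 w, w \in S & edge G v w) ->
  (forall v, v \in S -> owner G v = a -> exists2 w, s v = Some w & w \in S) ->
  extract G S a S s <> [::].
Proof.
move=> Sne G6 HA.
have YS : Yz G S a S s = S.
  have fS : ystep G S a s S = S.
    apply/setP => v; rewrite inE; case vS: (v \in S) => //=.
    case: ifP => [/eqP oa|_]; first by have [w -> ->] := HA v vS oa.
    by apply/forall_inP => w wS; rewrite wS implybT.
  rewrite /Yz; elim: #|V|.+1 => [|n IH] //=; by rewrite IH fS.
rewrite /extract YS.
set h := hrel G S a s S.
have hsucc : forall v, v \in S -> exists2 w, w \in S & h v w.
  move=> v vS; case: (eqVneq (owner G v) a) => oa.
    have [w E wS] := HA v vS oa; exists w => //.
    by rewrite /h /hrel vS wS oa eqxx E /=.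
  have [w wS e] := G6 v vS; exists w => //.
  by rewrite /h /hrel vS wS (negbTE oa) e.
have connS : forall p u, u \in S -> path h u p -> last u p \in S.
  elim=> [|z p IH] u uS //= /andP[huz pz]; apply: IH pz.
  by case/andP: (hrel_in huz).
have cS : forall u w, u \in S -> connect h u w -> w \in S.
  by move=> u w uS /connectP[p pp ->]; apply: connS.
case/set0Pn: Sne => v0 v0S.
pose reach u := [set w | connect h u w].
case: (arg_minnP (fun u => #|reach u|) v0S) => v vS vmin.
have bot : forall w, connect h v w -> connect h w v.
  move=> w cvw; have wS := cS _ _ vS cvw.
  have sub : reach w \subset reach v.
    by apply/subsetP => u; rewrite !inE => cwu; apply: connect_trans cvw cwu.
  have Ec : #|reach w| = #|reach v|.
    by apply/eqP; rewrite eqn_leq (subset_leq_card sub) vmin.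
  have := subset_cardP Ec; rewrite sub => /(_ isT) /(_ v).
  by rewrite !inE connect0.
have [y yS hvy] := hsucc v vS.
set C := [set w | connect h v w & connect h w v].
have Hin : C \in undup [seq [set w | connect h v w & connect h w v]
                     | v <- enum S & [forall w, connect h v w ==> connect h w v] &&
                       [exists x in [set w | connect h v w & connect h w v],
                        exists y in [set w | connect h v w & connect h w v], h x y]].
  rewrite mem_undup; apply/mapP; exists v => //.
  rewrite mem_filter mem_enum; apply/andP; split => //; apply/andP; split.
    by apply/forallP => w; apply/implyP; apply: bot.
  apply/existsP; exists v; rewrite inE connect0 /=; apply/existsP; exists y.
  by rewrite inE hvy (connect1 hvy) (bot _ (connect1 hvy)).
by move: Hin; case: (undup _).
Qed.
End Extract.


Section Search.
Variable V : finType.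
Variable G : game V.
Variable sel : {set V} -> V.
Hypothesis Hsel : forall A : {set V}, A != set0 -> sel A \in A.

Definition allTI (T : seq (tangle V)) := forall t, inT t T -> TI G t.
Definition G6 (S : {set V}) := forall v, v \in S -> exists2 w, w \in S & edge G v w.
Definition QR (S : {set V}) (T : seq (tangle V)) (R : {set V}) :=
  forall t, inT t T -> tverts t \subset S :\: R -> tverts t != set0 ->
    escapes G S t != set0 -> escapes G S t \subset R -> False.
Definition tvS (T : seq (tangle V)) : {set {set V}} :=
  [set C | has (fun t => tverts t == C) T].

Lemma hasT (p : pred (tangle V)) T : has p T -> exists2 t, inT t T & p t.
Proof.
elim: T => [|t T IH] //= /orP[pt|/IH[u Hu pu]]; first by exists t; [left|].
by exists u; [right|].
Qed.

Lemma hasT' (p : pred (tangle V)) T t : inT t T -> p t -> has p T.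
Proof. by elim: T => [|u T IH] //= [->|/IH H] pt; rewrite ?pt ?H ?orbT. Qed.

Lemma esc_eq (S : {set V}) t1 t2 : tverts t1 = tverts t2 -> escapes G S t1 = escapes G S t2.
Proof. by move=> E; rewrite /escapes /tparity E. Qed.

Lemma esc_sub (S S' : {set V}) t w : S' \subset S ->
  (w \in escapes G S' t) = (w \in S') && (w \in escapes G S t).
Proof.
move=> sub; rewrite /escapes !inE; case wS': (w \in S') => //=.
by rewrite (subsetP sub w wS').
Qed.

Lemma trap (S Z : {set V}) a : G6 S -> Z \subset S ->
  (forall v, v \in S -> owner G v = a -> succ_in G S Z v != set0 -> v \in Z) ->
  (forall v, v \in S -> owner G v != a -> [forall w in S, edge G v w ==> (w \in Z)] -> v \in Z) ->
  G6 (S :\: Z).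
Proof.
move=> H6 ZS F1 F2 v; rewrite inE => /andP[vZ vS].
case: (eqVneq (owner G v) a) => oa.
  have [w wS e] := H6 v vS; exists w => //; rewrite inE wS andbT.
  apply/negP => wZ; move: vZ; rewrite F1 //; apply/set0Pn; exists w.
  by rewrite inE wS e wZ.
have : ~~ [forall w in S, edge G v w ==> (w \in Z)] by apply: contra vZ; apply: F2.
rewrite negb_forall_in => /existsP[w /andP[wS]]; rewrite negb_imply => /andP[e wZ].
by exists w => //; rewrite inE wS wZ.
Qed.

Lemma QR_step (S R : {set V}) T a (Z : {set V}) (s : strat V) :
  QR S T R -> R \subset S -> Z \subset S :\: R ->
  Fix G (S :\: R) a [seq t <- T | tverts t \subset S :\: R] Z s ->
  QR S T (R :|: Z).
Proof.
move=> HQ RS ZS' [F1 F2 F3] t Ht tS ne ene eRZ.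
have tS' : tverts t \subset S :\: R.
  apply: subset_trans tS _; apply/subsetP => v; rewrite !inE negb_or.
  by case/andP=> /andP[-> _] ->.
case: (boolP [exists w in escapes G S t, w \in Z]) => [/existsP[e /andP[eE eZ]]|nE]; last first.
  apply: (HQ t Ht tS' ne ene); apply/subsetP => w wE.
  have := subsetP eRZ w wE; rewrite inE => /orP[//|wZ].
  by move: nE; rewrite negb_exists_in => /forall_inP/(_ w wE); rewrite wZ.
have eS' : e \in S :\: R := subsetP ZS' e eZ.
have tZdisj : forall v, v \in tverts t -> v \notin Z.
  by move=> v /(subsetP tS); rewrite !inE negb_or => /andP[/andP[_ ->]].
case: (eqVneq (tparity G t) a) => ta.
  have tT' : inT t [seq t <- T | tverts t \subset S :\: R] by apply/inT_filter.
  have eS : escapes G (S :\: R) t \subset Z.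
    apply/subsetP => w; rewrite (@esc_sub S (S :\: R)) ?subsetDl // => /andP[wS' wE].
    have := subsetP eRZ w wE; rewrite inE => /orP[wR|//].
    by move: wS'; rewrite inE wR.
  have ene' : escapes G (S :\: R) t != set0.
    by apply/set0Pn; exists e; rewrite (@esc_sub S (S :\: R)) ?subsetDl // eS' eE.
  have := F3 t tT' ta tS' ene' eS.
  case/set0Pn: ne => v vt /subsetP /(_ v vt) vZ.
  by move: (tZdisj v vt); rewrite vZ.
move: eE; rewrite /escapes inE => /andP[_ /andP[_ /existsP[u /andP[ut /andP[ou e_]]]]].
have uS' : u \in S :\: R := subsetP tS' u ut.
have oa : owner G u = a by rewrite (eqP ou); move: ta; case: (a); case: (tparity G t).
have : u \in Z.
  apply: (proj1 (F1 u uS' oa _)); apply/set0Pn; exists e.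
  by rewrite inE eS' e_ eZ.
by move: (tZdisj u ut) => /negbTE ->.
Qed.


Definition innerP (S : {set V}) (T : seq (tangle V)) (r : sres V) :=
  match r with
  | Defs.Found T' d => allTI T' /\ TI G d /\ tverts d \subset S /\ escapes G S d = set0
  | Defs.Done Y' => Y' <> [::] /\ (forall t, inT t Y' -> TI G t /\ tverts t \notin tvS T)
  end.

Lemma inner_ok S T : allTI T -> forall n R Y, #|S :\: R| < n -> R \subset S -> QR S T R ->
  (forall t, inT t Y -> TI G t /\ tverts t \notin tvS T) -> (R = S -> Y <> [::]) ->
  G6 (S :\: R) ->
  exists2 r, inner G sel S n T R Y = Some r & innerP S T r.
Proof.
move=> HT; elim=> [|n IH] R Y // Hn RS HQ HY HRS G6R /=.
case: eqP => [S0|/eqP S'ne].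
  exists (Defs.Done Y) => //; split => //; apply: HRS.
  apply/eqP; rewrite eqEsubset RS /=; apply/subsetP => v vS.
  apply: contraT => vR; have : v \in S :\: R by rewrite inE vR vS.
  by rewrite S0 inE.
set S' := S :\: R.
set T' := [seq t <- T | tverts t \subset S'].
set p := prmax G S'.
set A' := [set v in S' | prio G v == p].
have A'S : A' \subset S' by apply/subsetP => v; rewrite inE => /andP[].
have TH' : TH G T' (odd p) (fun x s' => odd (mp G (x :: s')) = odd p).
  move=> t /inT_filter [Ht _] ta; case: (HT t Ht) => _ T1 T2 T3; split => //.
  by move=> x s' /T3; rewrite ta.
have [Hinv Hfix] := tattr_ok Hsel A'S TH'.
case: (tattr G sel S' (odd p) T' A') Hinv Hfix => Z s Hinv Hfix /=.
have [[A'Z ZS'] I2 I3 I4 I5] := Hinv.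
have [F1 F2 F3] := Hfix.
have prS : forall v, v \in S' -> prio G v <= p.
  by move=> v vS; apply: leq_bigmax_cond.
have allwon : forall x s', cw (hrel G S' (odd p) s Z) x s' -> odd (mp G (x :: s')) = odd p.
  move=> x s' Hcw; case: (boolP (all (fun v => v \notin A') (x :: s'))) => HA.
    exact: I5.
  move: HA; rewrite -has_predC => /hasP[v Hv]; rewrite /= negbK inE => /andP[vS /eqP pv].
  congr odd; apply/eqP; rewrite eqn_leq; apply/andP; split.
    apply: mp_le => w Hw; apply: prS.
    have := cw_in (@hrel_in _ G S' (odd p) s Z) Hcw.
    by move=> /allP /(_ w Hw) /(subsetP ZS').
  by rewrite -pv; apply: mp_ub.
have Hs : forall v w, s v = Some w -> owner G v = odd p /\ edge G v w.
  by move=> v w /I2[].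
have Hext := extract_ok ZS' Hs allwon.
case Ef: [seq t <- extract G S' (odd p) Z s | escapes G S t == set0] => [|d ds].
  have nE : forall t, inT t (extract G S' (odd p) Z s) -> escapes G S t != set0.
    move=> t Ht; apply/negP => E.
    have : inT t [seq t <- extract G S' (odd p) Z s | escapes G S t == set0].
      by apply/inT_filter.
    by rewrite Ef.
  apply: IH.
  - have v0 : exists v, v \in A'.
      have [m mS Em] : {m | m \in S' & \max_(v in S') prio G v = prio G m}.
        by apply: eq_bigmax_cond; apply/card_gt0P; case/set0Pn: S'ne => v vS; exists v.
      by exists m; rewrite inE mS /p /prmax Em eqxx.
    case: v0 => v vA.
    have : S :\: (R :|: Z) \proper S'.
      rewrite properE; apply/andP; split.
        by apply/subsetP => w; rewrite !inE negb_or => /andP[/andP[-> _] ->].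
      apply/subsetPn; exists v; first exact: subsetP A'S v vA.
      by rewrite !inE (subsetP A'Z v vA) orbT.
    by move=> /proper_card H; change #|S :\: R| with #|S'| in Hn; lia.
  - by rewrite subUset RS; apply: subset_trans ZS' (subsetDl _ _).
  - exact: QR_step HQ RS ZS' Hfix.
  - move=> t /inT_cat [/HY//|Ht].
    have [TIt tZ ta eS'] := Hext t Ht; split => //.
    apply/negP; rewrite inE => /hasT [t' Ht' /eqP E].
    have tS' : tverts t \subset S' := subset_trans tZ ZS'.
    apply: (HQ t' Ht'); rewrite ?E //; first by case: TIt.
      by rewrite (esc_eq S E); apply: nE.
    apply/subsetP => w; rewrite (esc_eq S E) => wE.
    apply: contraT => wR.
    have : w \in escapes G S' t.
      rewrite (@esc_sub S S') ?subsetDl // wE andbT inE wR /=.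
      by move: wE; rewrite inE => /andP[].
    by rewrite eS' inE.
  - move=> E; have ZS : Z = S'.
      apply/eqP; rewrite eqEsubset ZS' /=; apply/subsetP => v; rewrite inE => /andP[vR vS].
      by move: vS; rewrite -E inE (negbTE vR).
    have : extract G S' (odd p) Z s <> [::].
      rewrite ZS; apply: extract_ne => //.
      move=> v vS oa; have [w wS e] := G6R v vS.
      have ne : succ_in G S' Z v != set0 by apply/set0Pn; exists w; rewrite inE wS e ZS wS.
      case: (F1 v vS oa ne) => _; case E': (s v) => [u|] H; last by case/eqP: H.
      by exists u => //; case: (I2 _ _ E') => _ _ _; rewrite ZS.
    by move=> Hne E'; apply: Hne; case: (Y) E'.
  - rewrite -setDDl; apply: (@trap S' Z (odd p) G6R ZS').
      by move=> v vS oa ne; case: (F1 v vS oa ne).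
    exact: F2.
exists (Defs.Found (T ++ Y) d) => //.
have : inT d [seq t <- extract G S' (odd p) Z s | escapes G S t == set0] by rewrite Ef; left.
case/inT_filter => Hd /eqP Ed; have [TId dZ _ _] := Hext d Hd.
split; first by move=> t /inT_cat [/HT|/HY[]].
split => //; split => //.
apply: subset_trans dZ (subset_trans ZS' (subsetDl _ _)).
Qed.

Lemma search_ok S : S != set0 -> G6 S -> forall n T, allTI T ->
  #|{set V}| - #|tvS T| + #|V| < n ->
  exists T', exists d, search G sel n S T = Some (T', d) /\
    allTI T' /\ TI G d /\ tverts d \subset S /\ escapes G S d = set0.
Proof.
move=> Sne H6; elim=> [|n IH] T HT Hn; first lia.
have [r Hr Pr] : exists2 r, inner G sel S n.+1 T set0 [::] = Some r & innerP S T r.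
  apply: (inner_ok HT).
- have := max_card (S :\: set0); lia.
- exact: sub0set.
- by move=> t _ _ _ ne; rewrite subset0 (negbTE ne).
- by [].
- by move=> E; move: Sne; rewrite -E eqxx.
- by rewrite setD0.
cbn -[inner]; rewrite Hr; case: r Hr Pr => [T' d|Y'] Hr Pr.
  by exists T', d; case: Pr => ? [? [? ?]].
case: Pr => Yne HY.
apply: IH.
  by move=> t /inT_cat [/HT|/HY[]].
have sub : tvS T \subset tvS (T ++ Y').
  by apply/subsetP => C; rewrite !inE has_cat => ->.
have : tvS T \proper tvS (T ++ Y').
  have [t0 Ht0] : exists t0, inT t0 Y' by case: (Y') Yne => [//|t0 l] _; exists t0; left.
  rewrite properE sub /=; apply/subsetPn; exists (tverts t0); last by case: (HY t0 Ht0).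
  by rewrite inE; apply: (@hasT' _ _ t0); [apply/inT_cat; right|].
move=> /proper_card H2; have H1 := max_card (tvS (T ++ Y')). move: Hn H1 H2. set K := #|{set V}|. set K2 := #|tvS (T ++ Y')|. set K1 := #|tvS T|. set c := #|V|. lia.
Qed.
End Search.


Section Solve.
Variable V : finType.
Variable G : game V.
Variable sel : {set V} -> V.
Hypothesis Hsel : forall A : {set V}, A != set0 -> sel A \in A.

Definition QF : V -> seq V -> Prop := fun _ _ => False.

Lemma wins_ext b (s s' : strat V) v : wins_from G b s v -> ext s s' -> wins_from G b s' v.
Proof. by move=> H ex p pl p0 pc; apply: H => // i w /ex /pc. Qed.

Lemma win_new (S : {set V}) (W : bool -> {set V}) (sg : bool -> strat V) d a (D : {set V}) s :
  (forall u, u \in S -> sg a u = None) ->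
  (forall v w, v \in S -> edge G v w -> w \notin S -> w \in W (~~ owner G v)) ->
  (forall v, v \in W a -> wins_from G a (sg a) v) ->
  TI G d -> tparity G d = a -> escapes G S d = set0 ->
  Inv G S a (tverts d) QF D s ->
  forall v, v \in D -> wins_from G a (sunion (sg a) (sunion (tstrat d) s)) v.
Proof.
move=> sgN P3 P4 [dne T1 T2 T3] da esc [[dD DS] I2 I3 I4 I5].
set sg' := sunion (sg a) (sunion (tstrat d) s).
move=> v vD p pl p0 pc.
have sg'E : forall u, u \in S -> sg' u = sunion (tstrat d) s u.
  by move=> u uS; rewrite /sg' /sunion sgN.
have escd : forall u w, u \in tverts d -> owner G u != a -> w \in S -> edge G u w -> w \in tverts d.
  move=> u w ud oa wS e; apply: contraT => wd.
  have : w \in escapes G S d.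
    rewrite /escapes inE wS wd /=; apply/existsP; exists u; rewrite ud e andbT /= da.
    by move: oa; case: (owner G u); case: (a).
  by rewrite esc inE.
have strd : forall u, u \in tverts d -> owner G u = a -> sg' u = tstrat d u /\ tstrat d u != None.
  move=> u ud oa; rewrite sg'E ?(subsetP DS _ (subsetP dD _ ud)) //; rewrite /sunion.
  have := T2 u ud; rewrite da => /(_ oa); by case: (tstrat d u).
have strD : forall u, u \in D -> u \notin tverts d -> owner G u = a -> sg' u = s u /\ s u != None.
  move=> u uD ud oa; rewrite sg'E ?(subsetP DS _ uD) // /sunion.
  case E: (tstrat d u) => [w|]; first by case: (T1 _ _ E) => ud'; rewrite ud' in ud.
  by split => //; apply: I3.
have step : forall i, p i \in D -> (p i.+1 \in D) || (p i.+1 \in W a).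
  move=> i piD; case: (eqVneq (owner G (p i)) a) => oa.
    case: (boolP (p i \in tverts d)) => pid.
      have [E ne] := strd _ pid oa; move: ne E; case E': (tstrat d (p i)) => [w|] // _ E.
      rewrite (pc i w) ?E //; case: (T1 _ _ E') => _ _ _ wd.
      by rewrite (subsetP dD _ wd).
    have [E ne] := strD _ piD pid oa; move: ne E; case E': (s (p i)) => [w|] // _ E.
    by rewrite (pc i w) ?E //; case: (I2 _ _ E') => _ _ _ ->.
  have e := pl i; case: (boolP (p i.+1 \in S)) => nS.
    case: (boolP (p i \in tverts d)) => pid.
      by rewrite (subsetP dD) // (escd (p i)).
    by rewrite (I4 (p i)).
  have := P3 _ _ (subsetP DS _ piD) e nS.
  have -> : ~~ owner G (p i) = a by move: oa; case: (owner G (p i)); case: (a).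
  by move=> ->; rewrite orbT.
case: (classic (exists i, p i \notin D)) => [exD|allD].
  have exD' : exists i, (fun i => p i \notin D) i by [].
  case: (ex_minnP exD') => i piD imin.
  have i0 : 0 < i by case: i piD {imin} => //; rewrite p0 vD.
  have prev : p i.-1 \in D.
    apply: contraT => H; have := imin _ H; lia.
  have piW : p i \in W a.
    by have := step _ prev; rewrite prednK // (negbTE piD).
  apply: (@won_shift _ _ _ _ i); apply: (P4 _ piW).
  - by move=> k; rewrite addnS; apply: pl.
  - by rewrite addn0.
  - move=> k w E; rewrite addnS; apply: pc.
    by rewrite /sg' /sunion E.
have inD : forall i, p i \in D by move=> i; apply: contraT => H; exfalso; apply: allD; exists i.
have [i0 i0d] : exists i, p i \in tverts d.
  apply: NNPP => H.
  have nd : forall i, p i \notin tverts d by move=> i; apply/negP => Hi; apply: H; exists i.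
  have hs : forall i, hrel G S a s D (p i) (p i.+1).
    move=> i; rewrite /hrel !inD /=; case: ifP => [/eqP oa|/negbT oa].
      have [E ne] := strD _ (inD i) (nd i) oa; move: ne E; case E': (s (p i)) => [w|] // _ E.
      by rewrite (pc i w) ?E.
    by rewrite pl (subsetP DS _ (inD i.+1)).
  have [i [j [ij Eij]]] := pigeon p.
  apply: (I5 (p i) (seg p i (j - i))).
    rewrite /cw seg_last subnKC; last lia.
    rewrite Eij eqxx andbT; apply/andP; split; first by case: (j - i) (ltac:(lia) : 0 < j - i).
    by rewrite -Eij; apply: seg_path => k _ _; apply: hs.
  by apply/allP => w /seg_mem[k _ ->].
have stay : forall m, p (i0 + m) \in tverts d.
  elim=> [|m IH]; first by rewrite addn0.
  rewrite addnS; case: (eqVneq (owner G (p (i0 + m))) a) => oa.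
    have [E ne] := strd _ IH oa; move: ne E; case E': (tstrat d _) => [w|] // _ E.
    by rewrite (pc _ w) ?E //; case: (T1 _ _ E') => _ _ _ ->.
  exact: (escd _ _ IH oa (subsetP DS _ (inD _)) (pl _)).
rewrite -da; apply: (walk_won (e := ht G d) (N := i0)) => //.
move=> k Hk; have kd : p k \in tverts d by rewrite -(subnKC Hk); apply: stay.
have k1d : p k.+1 \in tverts d by rewrite -(subnKC Hk) -addnS; apply: stay.
rewrite /ht kd k1d /= da; case: ifP => [/eqP oa|_]; last exact: pl.
have [E ne] := strd _ kd oa; move: ne E; case E': (tstrat d _) => [w|] // _ E.
by rewrite (pc _ w) ?E.
Qed.


Definition SI (S : {set V}) (T : seq (tangle V)) (W : bool -> {set V}) (sg : bool -> strat V) :=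
  [/\ (forall v, [|| v \in S, v \in W false | v \in W true]) /\
      (forall b v, v \in W b -> v \notin S) /\ (forall v, v \in W false -> v \notin W true),
   (forall b, is_strategy G b (sg b) /\ forall v w, sg b v = Some w -> v \in W b),
   (forall v w, v \in S -> edge G v w -> w \notin S -> w \in W (~~ owner G v)),
   (forall b v, v \in W b -> wins_from G b (sg b) v) &
   allTI G T /\ G6 G S].

Lemma step_SI S T W sg T'' d a D s :
  SI S T W sg -> allTI G T'' -> TI G d -> tparity G d = a -> tverts d \subset S ->
  escapes G S d = set0 -> Inv G S a (tverts d) QF D s -> Fix G S a [::] D s ->
  SI (S :\: D) [seq t <- T'' | tverts t \subset S :\: D]
     (fun b => if b == a then W b :|: D else W b)
     (fun b => if b == a then sunion (sg b) (sunion (tstrat d) s) else sg b).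
Proof.
move=> [[P1a [P1b P1c]] P2 P3 P4 [P5 P6]] HT'' TId da dS esc Hinv [F1 F2 F3].
have [[dD DS] I2 I3 I4 I5] := Hinv.
have [dne T1 T2 T3] := TId.
have sgN : forall u, u \in S -> sg a u = None.
  move=> u uS; case E: (sg a u) => [w|] //; case: (P2 a) => _ /(_ _ _ E) /P1b.
  by rewrite uS.
have Wsub : forall b v, v \in W b -> v \in (if b == a then W b :|: D else W b).
  by move=> b v vW; case: (b == a); rewrite ?inE vW.
have DW : forall v, v \in D -> v \in (if a == a then W a :|: D else W a).
  by move=> v vD; rewrite eqxx inE vD orbT.
split.
- split; [|split].
  + move=> v; case/or3P: (P1a v) => [vS|vW|vW].
    * case: (boolP (v \in D)) => vD; last by rewrite inE vD vS.
      by case: (a) DW => /(_ v vD) ->; rewrite !orbT.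
    * by rewrite (Wsub false v vW) orbT.
    * by rewrite (Wsub true v vW) !orbT.
  + move=> b v; rewrite inE negb_and negbK; case: eqP => [->|_] /=.
      by case/setUP => [/P1b ->|->]; rewrite ?orbT.
    by move/P1b => ->; rewrite orbT.
  + move=> v.
    have H : forall b, v \in (if b == a then W b :|: D else W b) -> v \in W b \/ (v \in D /\ b = a).
      by move=> b; case: eqP => [->|_] //; [case/setUP; [left|right]|left].
    case/H => [v0|[vD Ea]]; apply/negP => /H [v1|[vD' Eb]].
    * by move: (P1c v v0); rewrite v1.
    * by move: (P1b false v v0); rewrite (subsetP DS v vD').
    * by move: (P1b true v v1); rewrite (subsetP DS v vD).
    * by move: Ea; rewrite -Eb.
- move=> b; case: eqP => [->|_]; last exact: P2.
  case: (P2 a) => Ha Da; split.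
  + move=> v w; rewrite /sunion; case E: (sg a v) => [u|]; first by move=> [<-]; apply: Ha.
    case E': (tstrat d v) => [u|]; first by move=> [<-]; case: (T1 _ _ E') => _; rewrite da.
    by case/I2.
  + move=> v w; rewrite /sunion inE; case E: (sg a v) => [u|]; first by rewrite (Da _ _ E).
    case E': (tstrat d v) => [u|]; first by case: (T1 _ _ E') => vd; rewrite (subsetP dD _ vd) orbT.
    by case/I2 => ->; rewrite orbT.
- move=> v w; rewrite inE => /andP[vD vS] e; rewrite inE negb_and negbK.
  case: (boolP (w \in S)) => wS; rewrite ?orbF ?orbT; last first.
    by move=> _; apply: Wsub; apply: P3.
  move=> wD; have oa : owner G v != a.
    apply/eqP => oa; move: vD; rewrite (proj1 (F1 v vS oa _)) //.
    by apply/set0Pn; exists w; rewrite inE wS e wD.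
  have -> : ~~ owner G v = a by move: oa; case: (owner G v); case: (a).
  by rewrite eqxx inE wD orbT.
- move=> b v; case: eqP => [->|_]; last exact: P4.
  case/setUP => [vW|vD].
    apply: wins_ext (P4 a v vW) _ => u w E; by rewrite /sunion E.
  exact: (win_new sgN P3 (P4 a) TId da esc Hinv).
- split.
    by move=> t /inT_filter [/HT'' ? _].
  apply: (@trap _ G S D a P6 DS).
    by move=> v vS oa ne; case: (F1 v vS oa ne).
  exact: F2.
Qed.

Definition Sol (r : result V) :=
  [/\ W0 r :|: W1 r = setT, W0 r :&: W1 r = set0,
      is_strategy G false (s0 r) /\ is_strategy G true (s1 r) &
      (forall v, v \in W0 r -> wins_from G false (s0 r) v) /\
      (forall v, v \in W1 r -> wins_from G true (s1 r) v)].

Lemma solve_loopS n S T W sg : solve_loop G sel n.+1 S T W sg =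
    if S == set0 then Some (Result (W false) (W true) (sg false) (sg true)) else
    match search G sel n.+1 S T with
    | None => None
    | Some (T', d) =>
      let a := tparity G d in
      let: (D, s) := attr G sel S a (tverts d) in
      let W' := fun b => if b == a then W b :|: D else W b in
      let sg' := fun b => if b == a then sunion (sg b) (sunion (tstrat d) s)
                          else sg b in
      let S' := S :\: D in
      solve_loop G sel n S' [seq t <- T' | tverts t \subset S'] W' sg'
    end.
Proof. by []. Qed.

Lemma solve_ok : forall n S T W sg, SI S T W sg -> #|S| + (#|{set V}| + #|V|) < n ->
  exists r, solve_loop G sel n S T W sg = Some r /\ Sol r.
Proof.
elim=> [|n IH] S T W sg HSI Hn; first lia.
have HSI' := HSI; case: HSI' => [[P1a [P1b P1c]] P2 P3 P4 [P5 P6]].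
rewrite solve_loopS; case: eqP => [S0|/eqP Sne].
  exists (Result (W false) (W true) (sg false) (sg true)); split => //; split => //=.
  - apply/setP => v; rewrite !inE; move: (P1a v); by rewrite S0 inE.
  - apply/setP => v; rewrite !inE; case: (boolP (v \in W false)) => //= /P1c.
    by move/negbTE.
  - by split; [case: (P2 false)|case: (P2 true)].
  - by split; [apply: P4|apply: P4].
have Hf : #|{set V}| - #|tvS T| + #|V| < n.+1.
  move: Hn; set K := #|{set V}|; set x := #|tvS T|; set c := #|V|; set y := #|S|; lia.
have [T' [d [Hs [HT' [TId [dS esc]]]]]] := search_ok Hsel Sne P6 P5 Hf.
rewrite Hs.
have TH0 : TH G [::] (tparity G d) QF by [].
have [Hinv Hfix] := tattr_ok Hsel (Q := QF) dS TH0.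
rewrite /attr; case: (tattr G sel S (tparity G d) [::] (tverts d)) Hinv Hfix => D s Hinv Hfix /=.
apply: IH; first exact: step_SI HSI HT' TId erefl dS esc Hinv Hfix.
have : S :\: D \proper S.
  rewrite properE subsetDl /=; case: (TId) => dne _ _ _; case/set0Pn: dne => v vd.
  apply/subsetPn; exists v; first exact: subsetP dS v vd.
  by case: Hinv => [[dD _]] _ _ _ _; rewrite inE (subsetP dD v vd).
move/proper_card; move: Hn; set K := #|{set V}|; set c := #|V|; set y := #|S|; set z := #|S :\: D|; lia.
Qed.
End Solve.


Lemma det (V : finType) (G : game V) (Htotal : forall v : V, exists w : V, edge G v w)
  (f g : strat V) v :
  is_strategy G false f -> is_strategy G true g -> wins_from G false f v ->
  wins_from G true g v -> False.
Proof.
move=> Hf Hg Wf Wg.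
pose nxt u := match (if owner G u then g u else f u) with
              | Some w => w | None => odflt u [pick w | edge G u w] end.
have nE : forall u, edge G u (nxt u).
  move=> u; rewrite /nxt; case: ifP => ou.
    case E: (g u) => [w|]; first by case: (Hg _ _ E).
    by case: pickP => [w //|H]; case: (Htotal u) => w; rewrite H.
  case E: (f u) => [w|]; first by case: (Hf _ _ E).
  by case: pickP => [w //|H]; case: (Htotal u) => w; rewrite H.
pose p k := iter k nxt v.
have pl : play G p by move=> i; rewrite /p iterS; apply: nE.
apply: (@won_excl _ G p).
  apply: Wf => // i w E; rewrite /p iterS -/(p i) /nxt.
  by case: (Hf _ _ E) => -> _; rewrite E.
apply: Wg => // i w E; rewrite /p iterS -/(p i) /nxt.
by case: (Hg _ _ E) => -> _; rewrite E.
Qed.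

Theorem lemma10 (V : finType) (G : game V) (sel : {set V} -> V)
  (Htotal : forall v : V, exists w : V, edge G v w)
  (Hsel : forall A : {set V}, A != set0 -> sel A \in A) :
  exists (n : nat) (r : result V),
    solve G sel n = Some r /\ solution G r.
Proof.
have HSI : SI G setT [::] (fun _ => set0) (fun _ _ => None).
  split.
  - split; first by move=> v; rewrite inE.
    by split; [move=> b v; rewrite inE|move=> v; rewrite inE].
  - by move=> b; split.
  - by move=> v w _ _; rewrite inE.
  - by move=> b v; rewrite inE.
  - split; first by [].
    move=> v _; case: (Htotal v) => w e; by exists w; rewrite ?inE.
have [r [Hr [Hu Hi [S0 S1] [Wn0 Wn1]]]] :=
  @solve_ok _ G sel Hsel _ setT [::] (fun _ => set0) (fun _ _ => None) HSI (leqnn _).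
exists (#|[set: V]| + (#|{set V}| + #|V|)).+1, r; split; first exact: Hr.
have P : (forall v, v \in W0 r <-> won_vertex G false v) /\
         (forall v, v \in W1 r <-> won_vertex G true v).
  split.
  - move=> v; split; first by move=> vW; exists (s0 r); split => //; apply: Wn0.
    case=> f [Hf Wf]; apply: contraT => nW.
    have vW1 : v \in W1 r by move: (in_setT v); rewrite -Hu inE (negbTE nW).
    by case: (det Htotal Hf S1 Wf (Wn1 v vW1)).
  - move=> v; split; first by move=> vW; exists (s1 r); split => //; apply: Wn1.
    case=> f [Hf Wf]; apply: contraT => nW.
    have vW0 : v \in W0 r by move: (in_setT v); rewrite -Hu inE (negbTE nW) orbF.
    by case: (det Htotal S0 Hf (Wn0 v vW0) Wf).
by split.
Qed.
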